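(* Let $\mathfrak{H}$ be a fat Hoffman graph with $\lambda_{\min}(\mathfrak{H})>-3$. Then $\lambda_{\min}(\mathcal{S}(\mathfrak{H}))\ge\lambda_{\min}(\mathfrak{H})+1$.
   Context: A Hoffman graph $\mathfrak{H}$ is a finite simple graph $H$ together with a labeling of each vertex as slim or fat, such that every fat vertex is adjacent to at least one slim vertex and the fat vertices are pairwise non-adjacent. $V^s(\mathfrak{H})$ denotes the set of slim vertices and $N^f_{\mathfrak{H}}(x)$ the set of fat neighbours of $x$. $\mathfrak{H}$ is fat if every slim vertex has at least one fat neighbour. Writing the adjacency matrix of $H$ with fat vertices last as $\begin{pmatrix}A_s & C\\ C^T & O\end{pmatrix}$, set $B(\mathfrak{H})=A_s-CC^T$; $\lambda_{\min}(\mathfrak{H})$ is the smallest eigenvalue of $B(\mathfrak{H})$. An edge-signed graph is a simple graph each of whose edges is labelled $+$ or $-$; its signed adjacency matrix $M(\mathcal{S})$ has entries $1$ for $(+)$-edges, $-1$ for $(-)$-edges, $0$ otherwise, and $\lambda_{\min}(\mathcal{S})$ is its smallest eigenvalue. The special graph $\mathcal{S}(\mathfrak{H})$ is the edge-signed graph with vertex set $V^s(\mathfrak{H})$ in which distinct $u,v$ are joined by a $(+)$-edge iff $u,v$ are adjacent in $\mathfrak{H}$ and have no common fat neighbour, by a $(-)$-edge iff $u,v$ are non-adjacent in $\mathfrak{H}$ and have a common fat neighbour, and are not joined otherwise. *)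

(* Defs.v *)
From HB Require Import structures.
From mathcomp Require Import all_boot all_order all_algebra.
Set Implicit Arguments. Unset Strict Implicit. Unset Printing Implicit Defensive.
Import Order.TTheory GRing.Theory Num.Theory.
Local Open Scope ring_scope.

(* A Hoffman graph with n slim vertices 'I_n and m fat vertices 'I_m.
   [adj] is the adjacency relation among slim vertices, [c i j] says slim
   vertex i is adjacent to fat vertex j.  Fat vertices are pairwise
   non-adjacent by construction of this representation. *)
Definition hoffman_graph (n m : nat) (adj : rel 'I_n) (c : 'I_n -> 'I_m -> bool) : Prop :=
  [/\ forall i, ~~ adj i i,
      forall i j, adj i j = adj j i &
      forall f : 'I_m, exists i : 'I_n, c i f].

Definition fat_hoffman_graph n m (adj : rel 'I_n) (c : 'I_n -> 'I_m -> bool) : Prop :=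
  @hoffman_graph n m adj c /\ forall i : 'I_n, exists f : 'I_m, c i f.

Definition slim_adj_mx (R : nzRingType) n (adj : rel 'I_n) : 'M[R]_n :=
  \matrix_(i, j) (adj i j)%:R.
Definition fat_inc_mx (R : nzRingType) n m (c : 'I_n -> 'I_m -> bool) : 'M[R]_(n, m) :=
  \matrix_(i, j) (c i j)%:R.
Definition hoffman_B (R : comNzRingType) n m (adj : rel 'I_n) (c : 'I_n -> 'I_m -> bool) : 'M[R]_n :=
  slim_adj_mx R adj - fat_inc_mx R c *m (fat_inc_mx R c)^T.

Definition common_fat n m (c : 'I_n -> 'I_m -> bool) (u v : 'I_n) : bool :=
  [exists f : 'I_m, c u f && c v f].

Definition special_signed_mx (R : nzRingType) n m (adj : rel 'I_n) (c : 'I_n -> 'I_m -> bool) : 'M[R]_n :=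
  \matrix_(u, v)
    (if u == v then 0
     else if adj u v && ~~ common_fat c u v then 1
     else if ~~ adj u v && common_fat c u v then -1
     else 0).

Definition is_min_eigenvalue (R : numFieldType) n (A : 'M[R]_n) (lam : R) : Prop :=
  eigenvalue A lam /\ forall mu, eigenvalue A mu -> lam <= mu.

(* Main.v *)
Set Warnings "-all".
Require Import Defs.
From HB Require Import structures.
From mathcomp Require Import all_boot all_order all_algebra.
From mathcomp Require Import spectral sesquilinear complex.
From mathcomp Require Import ring lra.
Import Order.TTheory GRing.Theory Num.Theory.
Local Open Scope ring_scope.
Section Ray.
Local Open Scope sesquilinear_scope.
Variable R : rcfType.
Local Notation C := (R[i] : numClosedFieldType).
Local Notation f := (real_complex R).
Lemma conj_f (a : R) : Num.conj (f a : C) = f a.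
Proof.
apply/conj_Creal; rewrite realE.
have := num_real a; rewrite realE => /orP[h|h]; apply/orP.
by left; rewrite -(rmorph0 f) lecR.
by right; rewrite -(rmorph0 f) lecR.
Qed.
Lemma real_f (z : C) : z \is Num.real -> z = f (complex.Re z).
Proof.
rewrite realE => /orP[h|h].
  move: h; rewrite lecE; case: z => a b /= /andP[/eqP -> _] //.
move: h; rewrite lecE; case: z => a b /= /andP[/eqP <- _] //.
Qed.

Lemma rayleigh n (B : 'M[R]_n) (lam : R) : B^T = B ->
  (forall mu, eigenvalue B mu -> lam <= mu) ->
  forall x : 'rV[R]_n, lam * (x *m x^T) 0 0 <= (x *m B *m x^T) 0 0.
Proof.
move=> sB hlam x.
pose Bc : 'M[C]_n := map_mx f B.
have Bsym : Bc \is symmetricmx.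
  apply/is_hermitianmxP; rewrite expr0 scale1r map_mx_id //.
  by apply/matrixP => i j; rewrite !mxE; congr (f _); rewrite -{1}sB mxE.
have Breal : Bc \is a mxOver Num.real.
  by apply/mxOverP => i j; rewrite mxE; apply/CrealP; rewrite conj_f.
have Bn := symmetric_normalmx Bsym Breal.
have Bh : Bc \is hermsymmx := realsym_hermsym Bsym Breal.
have /orthomx_spectralP eqB := Bn.
set P := spectralmx Bc in eqB; set d := spectral_diag Bc in eqB.
have PU : P \is unitarymx := spectral_unitarymx Bc.
have Pu : P \in unitmx := spectral_unit Bc.
have dge : forall j, f lam <= d 0 j.
  move=> j; have dr := mxOverP (hermitian_spectral_diag_real Bh) 0 j.
  rewrite -/d in dr.
  suff hr : root (char_poly Bc) (d 0 j).
    rewrite (real_f _ dr) lecR; apply: hlam.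
    move: hr; rewrite {1}(real_f _ dr) -map_char_poly fmorph_root.
    by rewrite -eigenvalue_root_char.
  rewrite -eigenvalue_root_char; apply/eigenvalueP; exists (row j P).
    rewrite -row_mul.
    have -> : P *m Bc = diag_mx d *m P.
      by rewrite [in LHS]eqB !mulmxA mulmxV // mul1mx.
    by rewrite mul_diag_mx; apply/rowP => k; rewrite !mxE.
  apply/eqP => h0.
  have e1 : (row j P *m P^t*) 0 j = 1.
    by rewrite -row_mul mxE (unitarymxP PU) mxE eqxx.
  by move: e1; rewrite h0 mul0mx mxE => /eqP; rewrite eq_sym oner_eq0.
pose xc : 'rV[C]_n := map_mx f x.
have xcT : xc^t* = map_mx f (x^T).
  by apply/matrixP => i j; rewrite !mxE conj_f.
have e1 : f ((x *m B *m x^T) 0 0) = (xc *m Bc *m xc^t*) 0 0.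
  by rewrite xcT -!map_mxM [in RHS]mxE.
have e2 : f ((x *m x^T) 0 0) = (xc *m xc^t*) 0 0.
  by rewrite xcT -!map_mxM [in RHS]mxE.
pose y := xc *m P^t*.
have yT : y^t* = P *m xc^t*.
  by rewrite /y trmx_mul map_mxM trmxCK.
have e3 : xc *m Bc *m xc^t* = y *m diag_mx d *m y^t*.
  by rewrite yT eqB invmx_unitary // /y !mulmxA.
have PtP : P^t* *m P = 1%:M by rewrite -invmx_unitary // mulVmx.
have e4 : xc *m xc^t* = y *m y^t*.
  by rewrite yT /y mulmxA -(mulmxA xc) PtP mulmx1.
have hm : f (lam * (x *m x^T) 0 0) = f lam * f ((x *m x^T) 0 0) by rewrite rmorphM.
rewrite -lecR hm e1 e2 e3 e4; clearbody y; rewrite !mxE mulr_sumr.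
apply: ler_sum => j _; rewrite mul_mx_diag !mxE.
rewrite [y 0 j * d 0 j]mulrC -mulrA ler_wpM2r //.
  exact: mul_conjC_ge0.
Qed.
End Ray.

Section Main.
Variables (R : rcfType) (n m : nat) (adj : rel 'I_n) (c : 'I_n -> 'I_m -> bool).

Definition tc u w : nat := (\sum_f (c u f && c w f))%N.

Lemma B_entry u w : hoffman_B R adj c u w = (adj u w)%:R - (tc u w)%:R.
Proof.
rewrite /hoffman_B !mxE natr_sum; congr (_ - _); apply: eq_bigr => f _.
by rewrite !mxE -natrM mulnb.
Qed.

Lemma cf_t u w : common_fat c u w = (0 < tc u w)%N.
Proof.
rewrite lt0n sum_nat_eq0 /common_fat negb_forall; apply: eq_existsb => f.
by case: (c u f && c w f).
Qed.

Lemma t_le u w : (tc u w <= tc u u)%N.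
Proof. by apply: leq_sum => f _; case: (c u f); case: (c w f). Qed.

Lemma G_eq u w : \sum_f \sum_g (f != g)%:R * ((c u f)%:R * (c u g)%:R * (c w f)%:R * (c w g)%:R)
  = (tc u w)%:R * (tc u w)%:R - (tc u w)%:R :> R.
Proof.
pose b := fun f => ((c u f && c w f) : nat)%:R : R.
have hb f g : (c u f)%:R * (c u g)%:R * (c w f)%:R * (c w g)%:R = b f * b g :> R.
  by rewrite /b; case: (c u f); case: (c u g); case: (c w f); case: (c w g);
    rewrite /= ?mulr0 ?mul0r ?mulr1.
have hT : (tc u w)%:R = \sum_f b f by rewrite natr_sum.
rewrite hT mulr_suml -sumrB; apply: eq_bigr => f _.
under eq_bigr do rewrite hb.
rewrite (bigD1 f) //= [in RHS](bigD1 f) //= eqxx mul0r add0r mulrDr.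
have -> : b f * b f = b f by rewrite /b; case: (c u f && c w f); rewrite /= ?mulr0 ?mulr1.
rewrite addrAC subrr add0r mulr_sumr; apply: eq_bigr => g hg.
by rewrite eq_sym hg mul1r.
Qed.

Lemma E_entry (hirr : forall u, adj u u = false)
    (h2 : forall u, (tc u u <= 2)%N) (h1 : forall u, (0 < tc u u)%N) u w :
  2 * (special_signed_mx R adj c u w - hoffman_B R adj c u w - (u == w)%:R)
  = (tc u w)%:R * (tc u w)%:R - (tc u w)%:R :> R.
Proof.
rewrite B_entry /special_signed_mx mxE cf_t.
case: (eqVneq u w) => [<-|neq].
  rewrite hirr; have := h2 u; have := h1 u.
  by case: (tc u u) => [|[|[|k]]] //= _ _; ring.
have := leq_trans (t_le u w) (h2 u).
by case: (tc u w) => [|[|[|k]]] //= _; case: (adj u w) => /=; ring.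
Qed.

End Main.

Lemma qE (R : comNzRingType) n (A : 'M[R]_n) (v : 'rV[R]_n) :
  (v *m A *m v^T) 0 0 = \sum_u \sum_w v 0 u * A u w * v 0 w.
Proof.
rewrite mxE; under eq_bigr => w _ do rewrite !mxE mulr_suml.
by rewrite exchange_big.
Qed.

Lemma quad_ex4 (R : comNzRingType) n m (F : 'I_n -> 'I_n -> 'I_m -> 'I_m -> R) :
  \sum_u \sum_w \sum_f \sum_g F u w f g = \sum_f \sum_g \sum_u \sum_w F u w f g.
Proof.
under eq_bigr => u _ do rewrite exchange_big.
under eq_bigr => u _ do under eq_bigr => f _ do rewrite exchange_big.
rewrite exchange_big; apply: eq_bigr => f _; by rewrite exchange_big.
Qed.

Theorem mainTheorem4 (R : rcfType) (n m : nat) (adj : rel 'I_n)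
    (c : 'I_n -> 'I_m -> bool) (lam : R) :
  fat_hoffman_graph adj c ->
  is_min_eigenvalue (hoffman_B R adj c) lam ->
  -3 < lam ->
  forall mu : R, eigenvalue (special_signed_mx R adj c) mu -> lam + 1 <= mu.
Proof.
move=> [[hirr0 hsym _] hfat] [_ hmin] hlam3 mu /eigenvalueP [v hv vn0].
have hirr : forall u, adj u u = false by move=> u; apply/negbTE.
set B := hoffman_B R adj c; set M := special_signed_mx R adj c.
have sB : B^T = B.
  apply/matrixP => i j; rewrite mxE /B !B_entry hsym; congr (_ - _%:R).
  by apply: eq_bigr => f _; rewrite andbC.
have ray := @rayleigh _ _ _ _ sB hmin.
have h2 : forall u, (@tc _ _ c u u <= 2)%N.
  move=> u; have := ray 'e_u.
  rewrite -rowE trmx_delta -colE -rowE ![X in _ * X]mxE !eqxx /= 2![X in _ <= X]mxE /B B_entry hirr.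
  rewrite /= mulr1 => hle; rewrite -ltnS -(ltr_nat R); lra.
have h1 : forall u, (0 < @tc _ _ c u u)%N.
  move=> u; have [f hf] := hfat u.
  by rewrite /tc (bigD1 f) //= andbb hf.
pose Q := fun A : 'M[R]_n => (v *m A *m v^T) 0 0.
have hQM : Q M = mu * Q 1%:M.
  by rewrite /Q mulmx1 hv -scalemxAl mxE.
have hQB : lam * Q 1%:M <= Q B by rewrite /Q mulmx1; apply: ray.
have hQE : 0 <= Q M - Q B - Q 1%:M.
  have -> : Q M - Q B - Q 1%:M = Q (M - B - 1%:M).
    by rewrite /Q !mulmxBr !mulmxBl !mxE.
  pose s := fun f g => \sum_u v 0 u * ((c u f)%:R * (c u g)%:R).
  have e : 2 * Q (M - B - 1%:M) = \sum_f \sum_g (f != g)%:R * (s f g * s f g).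
    rewrite /Q qE mulr_sumr.
    transitivity (\sum_u \sum_w \sum_f \sum_g v 0 u * v 0 w *
       ((f != g)%:R * ((c u f)%:R * (c u g)%:R * (c w f)%:R * (c w g)%:R))).
      apply: eq_bigr => u _; rewrite mulr_sumr; apply: eq_bigr => w _.
      have -> : 2 * (v 0 u * (M - B - 1%:M) u w * v 0 w) =
         v 0 u * v 0 w * (2 * (M u w - B u w - (u == w)%:R)).
        by rewrite !mxE; ring.
      rewrite E_entry // -G_eq mulr_sumr; apply: eq_bigr => f _.
      by rewrite mulr_sumr.
    rewrite quad_ex4; apply: eq_bigr => f _; apply: eq_bigr => g _.
    rewrite /s mulr_suml mulr_sumr; apply: eq_bigr => u _.
    rewrite mulr_sumr mulr_sumr; apply: eq_bigr => w _; ring.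
  have : 0 <= 2 * Q (M - B - 1%:M).
    rewrite e; apply: sumr_ge0 => f _; apply: sumr_ge0 => g _.
    by apply: mulr_ge0 => //; rewrite -expr2 sqr_ge0.
  by rewrite pmulr_rge0.
have hQ1 : 0 < Q 1%:M.
  rewrite /Q mulmx1 mxE lt_neqAle; apply/andP; split; last first.
    by apply: sumr_ge0 => j _; rewrite mxE -expr2 sqr_ge0.
  apply/negP => /eqP/esym/eqP; rewrite psumr_eq0; last first.
    by move=> j _; rewrite mxE -expr2 sqr_ge0.
  move=> /allP h; apply/negP: vn0; rewrite negbK; apply/eqP/rowP => j.
  have := h j (mem_index_enum j); rewrite /= mxE mulf_eq0 orbb => /eqP ->.
  by rewrite mxE.
rewrite -(ler_pM2r hQ1) mulrDl mul1r; lra.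
Qed.
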